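(* Let $G = K(n_1,n_2,\ldots,n_p)$ be a complete multipartite graph, where $p \ge 2$ and $0\le n_1\le n_2\le\cdots\le n_p$, and let $N=n_1+n_2+\cdots+n_p$. Then: (a) if $2n_p \le N$, the detour sequence of $G$ is $(N)_N$; (b) if $2n_p > N$, the detour sequence of $G$ is $(2(N-n_p))_{N-n_p},\ (2(N-n_p)+1)_{n_p}$.
   Context: All graphs are finite and simple. $K(n_1,\ldots,n_p)$ denotes the complete multipartite graph whose vertex set is partitioned into independent sets $V_1,\ldots,V_p$ with $|V_i|=n_i$, two vertices being adjacent if and only if they lie in different parts. The order of a path is its number of vertices. For a vertex $v$, $\tau(v)$ is the order of a longest path having $v$ as an endvertex; the detour sequence is the nondecreasing sequence of the values $\tau(v)$ over all vertices. The notation $(n)_k$ denotes the integer $n$ repeated $k$ times consecutively. *)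

(* Defs.v *)
From mathcomp Require Import all_boot.
Set Implicit Arguments. Unset Strict Implicit. Unset Printing Implicit Defensive.

(* A simple graph is given by a symmetric irreflexive relation e on a finType T. *)

Definition is_gpath (T : finType) (e : rel T) (s : seq T) : bool :=
  match s with
  | [::] => false
  | x :: s' => path e x s' && uniq s
  end.

Definition has_endvertex (T : finType) (v : T) (s : seq T) : bool :=
  (head v s == v) || (last v s == v).

(* tau v = order of a longest path having v as an endvertex.
   Paths have distinct vertices, so their order is at most #|T|. *)
Definition tau (T : finType) (e : rel T) (v : T) : nat :=
  \max_(k < #|T|.+1 |
        [exists s : k.-tuple T, is_gpath e s && has_endvertex v s]) k.

Definition detour_seq (T : finType) (e : rel T) : seq nat :=
  sort leq [seq tau e v | v <- enum T].

(* Complete multipartite graph K(n_0, ..., n_{p-1}): vertex (i, j) with j < n i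
   lies in part i; two vertices are adjacent iff they lie in different parts. *)
Definition KVert (p : nat) (n : nat -> nat) : finType := {i : 'I_p & 'I_(n i)}.

Definition Kadj (p : nat) (n : nat -> nat) : rel (KVert p n) :=
  fun u v => tag u != tag v.

(* Main.v *)
Require Import Defs.
From mathcomp Require Import all_boot.
From mathcomp Require Import zify.

Lemma bool_cnt (b : seq bool) (x : bool) :
  path (fun a c => ~~ (a && c)) x b ->
  count id (x :: b) + ~~ x + ~~ last x b <= count negb (x :: b) + 1.
Proof.
elim: b x => [|y b IH] x /=; first by case: x.
move=> /andP [Hxy Hp]; have := IH y Hp => /=; clear Hp.
by case: x Hxy; case: y => //=; case: (last _ _) => /=; lia.
Qed.

Lemma count_enumT (T : finType) (a : pred T) : count a (enum T) = #|a|.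
Proof.
rewrite -size_filter -(card_uniqP _); last by rewrite filter_uniq // enum_uniq.
by apply: eq_card => x; rewrite mem_filter mem_enum andbT.
Qed.

Lemma map_in_cst (A B : eqType) (f : A -> B) c (s : seq A) :
  {in s, forall x, f x = c} -> map f s = nseq (size s) c.
Proof.
elim: s => //= x s IH H; rewrite H ?mem_head // IH // => y Hy.
by apply: H; rewrite inE Hy orbT.
Qed.

Lemma path_nseq (x : nat) b : path leq x (nseq b x).
Proof. by elim: b => //= b ->; rewrite leqnn. Qed.

Lemma sorted_nseq2 a b x y : x <= y -> sorted leq (nseq a x ++ nseq b y).
Proof.
move=> Hxy; case: a => [|a] /=.
  by case: b => //= b; apply: path_nseq.
elim: a => [|a IH] /=; last by rewrite leqnn.
by case: b => //= b; rewrite Hxy path_nseq.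
Qed.

Lemma subset_card (T : finType) (A : {set T}) k :
  k <= #|A| -> exists B : {set T}, B \subset A /\ #|B| = k.
Proof.
elim: k => [|k IH] Hk; first by exists set0; rewrite sub0set cards0.
have [B [HBA HB]] := IH (ltnW Hk).
have := cardsID B A; rewrite (setIidPr HBA) HB => HD.
have : 0 < #|A :\: B| by lia.
case/card_gt0P => x; rewrite inE => /andP [HxB HxA].
exists (x |: B); split; first by rewrite subUset sub1set HxA HBA.
by rewrite cardsU1 HxB HB.
Qed.
Set Implicit Arguments. Unset Strict Implicit.

Section G.
Variables (p : nat) (n : nat -> nat).
Local Notation T := (KVert p n).
Local Notation e := (@Kadj p n).

Definition cnt (S : {set T}) (i : 'I_p) := #|[set x in S | tag x == i]|.

Lemma cnt_disj (S : {set T}) i j : i != j -> cnt S i + cnt S j <= #|S|.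
Proof.
move=> Hij; rewrite /cnt -cardsUI.
have -> : [set x in S | tag x == i] :&: [set x in S | tag x == j] = set0.
  apply/setP => x; rewrite !inE.
  apply/negbTE/negP => /andP [/andP [_ /eqP Hi] /andP [_ /eqP Hj]].
  by move: Hij; rewrite -Hi -Hj eqxx.
rewrite cards0 addn0; apply: subset_leq_card; apply/subsetP => x.
by rewrite !inE => /orP [] /andP [].
Qed.

Lemma cnt_D1 (S : {set T}) v i : v \in S -> cnt S i = (tag v == i) + cnt (S :\ v) i.
Proof.
move=> Hv; rewrite /cnt (cardsD1 v [set x in S | tag x == i]) !inE Hv /=.
congr (_ + _); apply: eq_card => y; rewrite !inE; by rewrite andbA.
Qed.

Lemma ham k : forall (S : {set T}) v, #|S| = k.+1 -> v \in S ->
  (forall i, (cnt S i).*2 <= #|S| + (i == tag v)) ->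
  exists s, [/\ path e v s, uniq (v :: s), {subset v :: s <= S} & size s = k].
Proof.
elim: k => [|k IH] S v HS Hv Hc.
  by exists [::]; split => // x; rewrite inE => /eqP ->.
set S' := S :\ v.
have HS' : #|S'| = k.+1 by move: HS; rewrite (cardsD1 v S) Hv; case.
have [x Hx Hxv] : exists2 x, x \in S' & tag x != tag v.
  case: (boolP [exists x in S', tag x != tag v]).
    by case/exists_inP => x Hx Hxv; exists x.
  rewrite negb_exists_in => /forall_inP Hall.
  have : cnt S (tag v) = #|S|.
    apply: eq_card => y; rewrite !inE.
    case Hy: (y \in S) => //=.
    have [->|Hyv] := eqVneq y v; first by rewrite eqxx.
    by apply/negPn/Hall; rewrite !inE Hyv Hy.
  by move: (Hc (tag v)); rewrite eqxx => H1 H2; move: H1; rewrite H2 HS; lia.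
have Hx0 : (fun i => i != tag v) (tag x) by [].
case: (@arg_maxnP _ (tag x) (fun i => i != tag v) (fun i => cnt S' i) Hx0) => j Hj Hmax.
have Hcx : 0 < cnt S' (tag x).
  by apply/card_gt0P; exists x; rewrite !inE eqxx andbT -in_setD1.
have : 0 < cnt S' j by apply: leq_trans Hcx (Hmax _ Hx0).
case/card_gt0P => w; rewrite !inE => /andP [/andP [Hwv HwS] /eqP Hwj].
have HwS' : w \in S' by rewrite !inE Hwv HwS.
have Hc' : forall i, (cnt S' i).*2 <= #|S'| + (i == tag w).
  move=> i; rewrite HS' Hwj.
  have HcS := Hc i; rewrite HS (cnt_D1 i Hv) -/S' in HcS.
  case: (i =P j) => [->|/eqP Hij].
    have := Hc j; rewrite HS (cnt_D1 j Hv) eq_sym (negbTE Hj) /= -/S'.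
    lia.
  case: (i =P tag v) => [Hiv|/eqP Hiv].
    move: HcS; rewrite Hiv !eqxx /=. lia.
  have := Hmax i Hiv; have := cnt_disj S' Hij; rewrite HS' /= => H1 H2.
  move: H1 H2; rewrite /geq /= addn0; lia.
have [s [Hp Hu Hsub Hsz]] := IH S' w HS' HwS' Hc'.
exists (w :: s); split => //.
- by rewrite /= Hp andbT /Kadj Hwj eq_sym.
- rewrite cons_uniq Hu andbT; apply/negP => /Hsub.
  by rewrite !inE eqxx.
- move=> y; rewrite inE => /orP [/eqP ->//|/Hsub].
  by rewrite !inE => /andP [].
- by rewrite /= Hsz.
Qed.

Lemma tau_ge v s : path e v s -> uniq (v :: s) -> size (v :: s) <= tau e v.
Proof.
move=> Hp Hu.
have Hlt : size (v :: s) < #|T|.+1.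
  by rewrite ltnS -(card_uniqP Hu) max_card.
have Hsz : size (v :: s) == size (v :: s) by [].
apply: (@leq_bigmax_cond _ _ (fun k : 'I_#|T|.+1 => nat_of_ord k) (Ordinal Hlt)).
apply/existsP; exists (Tuple Hsz) => /=.
by rewrite Hp -cons_uniq Hu /has_endvertex /= eqxx.
Qed.

Lemma tau_le v t : (forall s, is_gpath e s -> has_endvertex v s -> size s <= t) ->
  tau e v <= t.
Proof.
move=> H; apply/bigmax_leqP => k /existsP [s /andP [H1 H2]].
by rewrite -(size_tuple s); apply: H.
Qed.

Variable L : 'I_p.
Definition isL (v : T) := tag v == L.
Definition PL := [set v : T | isL v].

Lemma path_cnt v s : path e v s ->
  count isL (v :: s) + ~~ isL v + ~~ isL (last v s) <=
  count (predC isL) (v :: s) + 1.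
Proof.
move=> Hp.
have Hb : path (fun a c => ~~ (a && c)) (isL v) (map isL s).
  rewrite path_map; apply: sub_path Hp => x y; rewrite /Kadj /isL /=.
  by apply: contraNN => /andP [/eqP -> /eqP ->].
have := @bool_cnt _ _ Hb; rewrite last_map -map_cons !count_map.
by rewrite (@eq_count _ (preim isL negb) (predC isL)).
Qed.

Lemma path_bound s v : is_gpath e s -> has_endvertex v s ->
  size s <= #|T| /\ size s + ~~ isL v <= (#|~: PL|).*2 + 1.
Proof.
case: s => [//|x s] /andP [Hp Hu] Hend.
split; first by rewrite -(card_uniqP Hu) max_card.
have H1 := path_cnt Hp.
have Hv : ~~ isL v <= ~~ isL x + ~~ isL (last x s).
  by move: Hend; rewrite /has_endvertex /= => /orP [] /eqP <-; case: (isL _); case: (isL _).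
have HcN : count (predC isL) (x :: s) <= #|~: PL|.
  rewrite -size_filter -(card_uniqP _); last by rewrite filter_uniq.
  apply: subset_leq_card; apply/subsetP => y.
  by rewrite mem_filter !inE => /andP [].
have := count_predC isL (x :: s); rewrite /= => Hsz.
rewrite -Hsz; move: H1 HcN Hv; rewrite /=; lia.
Qed.

End G.
Unset Implicit Arguments.
Theorem theorem1p23 (p : nat) (n : nat -> nat) :
  2 <= p ->
  (forall i j, i <= j < p -> n i <= n j) ->
  let N := \sum_(i < p) n i in
  let np := n p.-1 in
  (np.*2 <= N -> detour_seq (@Kadj p n) = nseq N N) /\
  (N < np.*2 ->
     detour_seq (@Kadj p n) =
       nseq (N - np) (2 * (N - np)) ++ nseq np (2 * (N - np)).+1).
Proof.
move=> Hp2 Hmono N np.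
have HL : p.-1 < p by lia.
pose L : 'I_p := Ordinal HL.
have HcardT : #|(KVert p n)| = N.
  rewrite /KVert card_tagged sumnE big_map big_enum /=.
  by apply: eq_bigr => i _; rewrite card_ord.
have Hpart : forall i : 'I_p, #|[set x : (KVert p n) | tag x == i]| = n i.
  move=> i.
  have -> : [set x : (KVert p n) | tag x == i] = [set (Tagged (fun i : 'I_p => 'I_(n i)) j : (KVert p n)) | j : 'I_(n i)].
    apply/setP => x; rewrite !inE.
    apply/eqP/imsetP => [Hx|[j _ ->]] //.
    by exists (etagged Hx) => //; rewrite etaggedK.
  by rewrite card_imset ?card_ord //; apply: eq_from_Tagged.
have HPL : #|@PL p n L| = np by rewrite /PL /isL; exact: Hpart L.
have HM : #|~: @PL p n L| = N - np by have := cardsC (@PL p n L); rewrite HPL HcardT; lia.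
have Hle : forall i : 'I_p, n i <= np.
  by move=> i; apply: Hmono; rewrite HL andbT -ltnS prednK // ?ltn_ord; lia.
have Hcnt : forall (S : {set (KVert p n)}) (i : 'I_p), cnt S i <= n i.
  move=> S i; rewrite -(Hpart i); apply: subset_leq_card; apply/subsetP => x.
  by rewrite !inE => /andP [].
split.
- move=> Ha.
  have Htau : forall v : (KVert p n), tau (@Kadj p n) v = N.
    move=> v; apply/eqP; rewrite eqn_leq; apply/andP; split.
      apply: tau_le => s Hs Hv.
      by rewrite -HcardT; case: (@path_bound p n L _ _ Hs Hv).
    have [k Hk] : exists k, #|[set: (KVert p n)]| = k.+1.
      exists #|[set: (KVert p n)]|.-1; rewrite prednK //.
      by apply/card_gt0P; exists v; rewrite inE.
    have Hc : forall i, (cnt [set: (KVert p n)] i).*2 <= #|[set: (KVert p n)]| + (i == tag v).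
      move=> i; rewrite cardsT HcardT; have := Hcnt [set: (KVert p n)] i; have := Hle i; lia.
    have [s [Hp Hu _ Hsz]] := ham Hk (in_setT v) Hc.
    have -> : N = size (v :: s) by rewrite /= Hsz -Hk cardsT.
    exact: tau_ge.
  rewrite /detour_seq (eq_map Htau) (@map_in_cst _ _ _ N) // -cardT HcardT.
  by rewrite sorted_sort //; [exact: leq_trans | rewrite -[nseq N N]cats0; exact: (@sorted_nseq2 N 0 N N)].
move=> Hb.
set M := N - np.
have HMnp : M < np by rewrite /M; lia.
pose isLv := @isL p n L.
have Htau : forall v : (KVert p n), tau (@Kadj p n) v = 2 * M + isLv v.
  move=> v; apply/eqP; rewrite eqn_leq; apply/andP; split.
    apply: tau_le => s Hs Hv.
    case: (@path_bound p n L _ _ Hs Hv) => _; rewrite HM -/M /isLv.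
    by case: (isL L v) => /=; lia.
  have [B [HB1 HB2 HB3]] : exists B : {set (KVert p n)},
      [/\ B \subset @PL p n L, #|B| = M + isLv v & v \in ~: @PL p n L :|: B].
    case HvL: (isLv v).
      have HvP : v \in @PL p n L by rewrite inE.
      have := cardsD1 v (@PL p n L); rewrite HvP HPL /= => HD.
      have HMle : M <= #|@PL p n L :\ v|.
        by move: HMnp; rewrite HD add1n ltnS.
      have [B0 [HB0 HB0c]] := @subset_card _ (@PL p n L :\ v) M HMle.
      exists (v |: B0); split.
      - by rewrite subUset sub1set HvP (subset_trans HB0) // subsetDl.
      - rewrite cardsU1 HB0c.
        have -> : v \notin B0 by apply/negP => /(subsetP HB0); rewrite !inE eqxx.
        by rewrite addnC.
      - by rewrite !inE eqxx orbT.
    have [B0 [HB0 HB0c]] := @subset_card _ (@PL p n L) M ltac:(lia).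
    exists B0; split => //; first by rewrite HB0c addn0.
    by rewrite !inE; move: HvL; rewrite /isLv => ->.
  set S := ~: @PL p n L :|: B.
  have HS : #|S| = M + #|B|.
    rewrite /S cardsU HM -/M.
    have -> : ~: @PL p n L :&: B = set0.
      apply/setP => x; rewrite !inE; apply/negbTE/negP => /andP [Hx /(subsetP HB1)].
      by rewrite inE (negbTE Hx).
    by rewrite cards0 subn0.
  have [k Hk] : exists k, #|S| = k.+1.
    exists #|S|.-1; rewrite prednK //.
    by apply/card_gt0P; exists v.
  have Hc : forall i, (cnt S i).*2 <= #|S| + (i == tag v).
    move=> i; rewrite HS.
    case: (eqVneq i L) => [->|HiL].
      have : cnt S L <= #|B|.
        apply: subset_leq_card; apply/subsetP => x; rewrite !inE.
        case/andP => /orP [Hx|//] HxL.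
        by move: Hx; rewrite /isL HxL.
      have Hb2 : (L == tag v) = isLv v by rewrite /isLv /isL eq_sym.
      rewrite Hb2; move: HB2; lia.
    have : cnt S i <= M.
      rewrite /M -HM; apply: subset_leq_card; apply/subsetP => x; rewrite !inE.
      case/andP => _ /eqP Hxi; apply/negP => /eqP HxL.
      by move: HiL; rewrite -Hxi HxL eqxx.
    lia.
  have [s [Hp Hu _ Hsz]] := ham Hk HB3 Hc.
  have -> : 2 * M + isLv v = size (v :: s) by rewrite /= Hsz -Hk HS HB2; lia.
  exact: tau_ge.
rewrite /detour_seq (eq_map Htau).
apply: (sorted_eq leq_trans anti_leq (sort_sorted leq_total _)).
  by apply: sorted_nseq2.
rewrite perm_sort.
have := perm_filterC (predC isLv) (enum (KVert p n)); move/permPl => Hperm.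
rewrite perm_sym in Hperm.
apply: (perm_trans (perm_map (fun v => 2 * M + isLv v) Hperm)).
rewrite map_cat.
have Hc1 : count (predC isLv) (enum (KVert p n)) = M.
  by rewrite count_enumT /M -HM; apply: eq_card => x; rewrite !inE.
have Hc2 : count (predC (predC isLv)) (enum (KVert p n)) = np.
  by rewrite count_enumT -HPL; apply: eq_card => x; rewrite !inE /= negbK.
rewrite (@map_in_cst _ _ _ (2 * M)); last first.
  by move=> x; rewrite mem_filter => /andP [/= /negbTE -> _]; rewrite addn0.
rewrite (@map_in_cst _ _ _ (2 * M).+1); last first.
  by move=> x; rewrite mem_filter => /andP [/= /negbNE -> _]; rewrite addn1.
by rewrite !size_filter Hc1 Hc2.
Qed.
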